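(* Let $(M,D_t)$ be a differential module of rank $\mathfrak r$ over $\mathcal O_t^\pm$, let $a\in{\mathscr D}_t^\pm(k)$, and let $m_1,\dots,m_{\mathfrak r}$ be a basis of the space of horizontal elements of $M$ at $a$. The following are equivalent: (1) $m_1,\dots,m_{\mathfrak r}$ is an optimal basis at $a$; (2) for every $r$, letting $J_r=\{j: \mathcal R_a(m_j)=r\}$, every nontrivial $k$-linear combination $\sum_{j\in J_r}\alpha_jm_j$ has radius of convergence $r$ at $a$; (3) for every nonzero horizontal element $m$ at $a$ with radius of convergence $r$, writing $m=\sum_{i=1}^{\mathfrak r}\beta_im_i$, one has $\mathcal R_a(m_i)\ge r$ for every $i$ with $\beta_i\ne0$, and $\mathcal R_a(m_i)=r$ for at least one such $i$.
   Context: $k$ is an algebraically closed field complete for a non-archimedean absolute value extending the $p$-adic one. ${\mathscr D}_t^\pm$ is the unit disc (open or closed) with ring $\mathcal O_t^\pm$; $\mathcal O_t(a,r^-)$ the ring of power series in $t-a$ converging on $|t-a|<r$. For $f\in k[[t-a]]$, $\mathcal R_a(f)=\sup\{r\in[0,1):f\in\mathcal O_t(a,r^-)\}$, for vectors the minimum over components. A differential module of rank $\mathfrak r$ is a free $\mathcal O_t^\pm$-module $M$ of rank $\mathfrak r$ with $k$-linear $D_t$, $D_t(gm)=\frac{dg}{dt}m+gD_t(m)$. A horizontal element at $a$ is an element of $\ker D_t$ on $M\otimes\mathcal O_t(a,r^-)$ for some $r>0$, identified with its coordinate vector in $k[[t-a]]^{\mathfrak r}$ with respect to a fixed basis of $M$;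 its radius of convergence is $\mathcal R_a$ of this vector (independent of the basis). The horizontal elements at $a$ form a $k$-vector space of dimension $\mathfrak r$. The multiradius at $a$ is $(\mathcal R_1,\dots,\mathcal R_{\mathfrak r})$ with $\mathcal R_i=\sup\{r\in(0,1]:\dim_k\ker(D_t|M\otimes\mathcal O_t(a,r^-))\ge\mathfrak r-i+1\}$; a basis of horizontal elements at $a$ is optimal if the radii of its elements can be rearranged to form the multiradius. *)

(* Defs.v *)
From HB Require Import structures.
From mathcomp Require Import all_boot all_order all_algebra.
From mathcomp Require Import fingroup perm.
From mathcomp Require Import boolp classical_sets reals.

Set Implicit Arguments.
Unset Strict Implicit.
Unset Printing Implicit Defensive.

Import Order.TTheory GRing.Theory Num.Theory.
Local Open Scope ring_scope.

Section Defs.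
Variables (k : fieldType) (R : realType) (abs : k -> R).

Definition nonarch_abs : Prop :=
  [/\ forall x, 0 <= abs x,
      forall x, abs x = 0 <-> x = 0,
      forall x y, abs (x * y) = abs x * abs y &
      forall x y, abs (x + y) <= Num.max (abs x) (abs y)].

(** The p-adic absolute value on Q: |q|_p = p^(-v_p(q)), |0|_p = 0. *)
Definition padic_abs (p : nat) (q : rat) : R :=
  if q == 0 then 0
  else (p%:R ^+ logn p `|denq q|%N) / (p%:R ^+ logn p `|numq q|%N).

Definition extends_padic (p : nat) : Prop :=
  forall q : rat, abs (ratr q) = padic_abs p q.

Definition abs_cauchy (s : nat -> k) : Prop :=
  forall eps : R, 0 < eps -> exists N, forall m n, (N <= m)%N -> (N <= n)%N ->
    abs (s m - s n) < eps.

Definition is_klim (s : nat -> k) (L : k) : Prop :=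
  forall eps : R, 0 < eps -> exists N, forall n, (N <= n)%N -> abs (s n - L) < eps.

Definition abs_complete : Prop :=
  forall s, abs_cauchy s -> exists L, is_klim s L.

(** The limit of a sequence (0 if it does not converge). *)
Definition klim (s : nat -> k) : k :=
  match pselect (exists L, is_klim s L) with
  | left h => projT1 (cid h)
  | right _ => 0
  end.

(** Power series are coefficient sequences; c : nat -> k represents
    sum_n c n * (t - a)^n, centered at a point fixed by context. *)
Definition partial_sum (c : nat -> k) (x : k) (N : nat) : k :=
  \sum_(i < N) c i * x ^+ i.

Definition series_converges (c : nat -> k) (x : k) : Prop :=
  exists L, is_klim (partial_sum c x) L.

(** c is in O_t(a, r^-): the series sum c n (t-a)^n converges at every
    point t of k with |t - a| < r. *)
Definition in_Odisc (a : k) (r : R) (c : nat -> k) : Prop :=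
  forall x : k, abs (x - a) < r -> series_converges c (x - a).

(** The ring O_t^+ (closed = true) or O_t^- (closed = false) of the unit
    disc: power series in t converging on |t| <= 1, resp. |t| < 1. *)
Definition in_unit_disc (closed : bool) (x : k) : Prop :=
  if closed then abs x <= 1 else abs x < 1.

Definition in_Ot (closed : bool) (c : nat -> k) : Prop :=
  forall x : k, in_unit_disc closed x -> series_converges c x.

Definition taylor_at (a : k) (c : nat -> k) : nat -> k :=
  fun m => klim (fun N => \sum_(n < N) c n * ('C(n, m))%:R * a ^+ (n - m)).

Definition fderiv (c : nat -> k) : nat -> k := fun n => c n.+1 *+ n.+1.
Definition fmul (c d : nat -> k) : nat -> k :=
  fun n => \sum_(i < n.+1) c i * d (n - i)%N.

Definition radius (a : k) (c : nat -> k) : R :=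
  sup [set r : R | 0 <= r < 1 /\ in_Odisc a r c].

Variable n : nat.

(** Coordinate vectors (w.r.t. the fixed basis of M) of elements of
    M (x) k[[t - a]]: component i, coefficient of (t-a)^l. *)
Definition vec := 'I_n -> nat -> k.

Definition radius_vec (a : k) (y : vec) : R :=
  \big[Num.min/1]_(i < n) radius a (y i).

(** A differential module (M, D_t) of rank n over O_t^pm, with a fixed
    basis e_1..e_n of M, is given by the matrix G with
    D_t(e_j) = sum_i G i j e_i, G i j in O_t^pm. *)
Definition diffmod (closed : bool) (G : 'I_n -> 'I_n -> nat -> k) : Prop :=
  forall i j, in_Ot closed (G i j).

Definition Dt_at (a : k) (G : 'I_n -> 'I_n -> nat -> k) (y : vec) : vec :=
  fun i l => fderiv (y i) l + \sum_(j < n) fmul (taylor_at a (G i j)) (y j) l.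

Definition in_ker (a : k) (G : 'I_n -> 'I_n -> nat -> k) (r : R) (y : vec) : Prop :=
  (forall i, in_Odisc a r (y i)) /\ Dt_at a G y = (fun _ _ => 0).

Definition horizontal (a : k) (G : 'I_n -> 'I_n -> nat -> k) (y : vec) : Prop :=
  exists r : R, 0 < r /\ in_ker a G r y.

Definition lincomb (P : pred 'I_n) (beta : 'I_n -> k) (m : 'I_n -> vec) : vec :=
  fun i l => \sum_(j < n | P j) beta j * m j i l.

Definition lin_indep (d : nat) (v : 'I_d -> vec) : Prop :=
  forall beta : 'I_d -> k,
    (fun i l => \sum_(j < d) beta j * v j i l) = (fun _ _ => 0) ->
    forall j, beta j = 0.

Definition dim_ker_ge (a : k) (G : 'I_n -> 'I_n -> nat -> k) (r : R) (d : nat) : Prop :=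
  exists v : 'I_d -> vec, (forall l, in_ker a G r (v l)) /\ lin_indep v.

(** Multiradius: for the 0-based index i (i.e. R_{i+1} of the paper),
    sup { r in (0,1] : dim ker >= n - (i+1) + 1 }. *)
Definition multiradius (a : k) (G : 'I_n -> 'I_n -> nat -> k) (i : 'I_n) : R :=
  sup [set r : R | 0 < r <= 1 /\ dim_ker_ge a G r (n - i)%N].

Definition horizontal_basis (a : k) (G : 'I_n -> 'I_n -> nat -> k)
    (m : 'I_n -> vec) : Prop :=
  [/\ forall j, horizontal a G (m j),
      lin_indep m &
      forall y, horizontal a G y -> exists beta, y = lincomb predT beta m].

Definition optimal_basis (a : k) (G : 'I_n -> 'I_n -> nat -> k)
    (m : 'I_n -> vec) : Prop :=
  exists s : {perm 'I_n}, forall i, radius_vec a (m (s i)) = multiradius a G i.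

End Defs.

(* Main.v *)
Require Import Defs.
From HB Require Import structures.
From mathcomp Require Import all_boot all_order all_algebra.
From mathcomp Require Import fingroup perm.
From mathcomp Require Import boolp classical_sets reals.
From mathcomp Require Import ring lra zify.
Set Implicit Arguments.
Unset Strict Implicit.
Unset Printing Implicit Defensive.
Import Order.TTheory GRing.Theory Num.Theory.
Local Open Scope ring_scope.

Lemma abs0 (k : fieldType) (R : realType) (abs : k -> R) :
  nonarch_abs abs -> abs 0 = 0.
Proof. by case=> _ h _ _; apply/h. Qed.

Lemma klim_add (k : fieldType) (R : realType) (abs : k -> R) s t L M :
  nonarch_abs abs -> is_klim abs s L -> is_klim abs t M ->
  is_klim abs (fun N => s N + t N) (L + M).
Proof.
move=> ha hs ht e e0; have [N1 H1] := hs e e0; have [N2 H2] := ht e e0.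
exists (maxn N1 N2) => q hq.
have -> : s q + t q - (L + M) = (s q - L) + (t q - M) by ring.
case: ha => _ _ _ hmax; apply: le_lt_trans (hmax _ _) _.
rewrite gt_max H1 ?H2 //; [exact: leq_trans (leq_maxr _ _) hq|exact: leq_trans (leq_maxl _ _) hq].
Qed.

Lemma klim_scale (k : fieldType) (R : realType) (abs : k -> R) s L u :
  nonarch_abs abs -> is_klim abs s L ->
  is_klim abs (fun N => u * s N) (u * L).
Proof.
move=> ha hs e e0.
have hu0 := abs0 ha.
case: (eqVneq u 0) => [->|un0].
  by exists 0%N => q _; rewrite !mul0r subrr hu0.
have au : 0 < abs u.
  case: ha => h1 h2 _ _; rewrite lt_def h1 andbT; apply/eqP => /h2; exact/eqP.
have [N HN] := hs (e / abs u) (divr_gt0 e0 au).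
exists N => q hq; rewrite -mulrBr; case: (ha) => _ _ hm _; rewrite hm.
by rewrite -ltr_pdivlMl // mulrC HN.
Qed.

Lemma psum_add (k : fieldType) (c d : nat -> k) x N :
  partial_sum (fun l => c l + d l) x N = partial_sum c x N + partial_sum d x N.
Proof. by rewrite /partial_sum -big_split /=; apply: eq_bigr => i _; rewrite mulrDl. Qed.

Lemma psum_scale (k : fieldType) (c : nat -> k) u x N :
  partial_sum (fun l => u * c l) x N = u * partial_sum c x N.
Proof. by rewrite /partial_sum mulr_sumr; apply: eq_bigr => i _; rewrite mulrA. Qed.

Lemma Od_add (k : fieldType) (R : realType) (abs : k -> R) a r c d :
  nonarch_abs abs -> in_Odisc abs a r c -> in_Odisc abs a r d ->
  in_Odisc abs a r (fun l => c l + d l).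
Proof.
move=> ha hc hd x hx; have [L HL] := hc x hx; have [M HM] := hd x hx.
exists (L + M); have := klim_add ha HL HM.
by have -> : partial_sum (fun l => c l + d l) (x - a) = (fun N => partial_sum c (x - a) N + partial_sum d (x - a) N)
  by apply: funext => N; rewrite psum_add.
Qed.

Lemma Od_scale (k : fieldType) (R : realType) (abs : k -> R) a r c u :
  nonarch_abs abs -> in_Odisc abs a r c ->
  in_Odisc abs a r (fun l => u * c l).
Proof.
move=> ha hc x hx; have [L HL] := hc x hx.
exists (u * L); have := klim_scale u ha HL.
by have -> : partial_sum (fun l => u * c l) (x - a) = (fun N => u * partial_sum c (x - a) N)
  by apply: funext => N; rewrite psum_scale.
Qed.

Lemma Od_zero (k : fieldType) (R : realType) (abs : k -> R) a r :
  nonarch_abs abs -> in_Odisc abs a r (fun _ => 0).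
Proof.
move=> ha x hx; exists 0 => e e0; exists 0%N => q _.
rewrite /partial_sum big1 ?subrr ?abs0 // => i _; by rewrite mul0r.
Qed.

Lemma Od_sum (k : fieldType) (R : realType) (abs : k -> R) a r (I : Type)
   (s : seq I) (P : pred I) (F : I -> nat -> k) :
  nonarch_abs abs -> (forall j, P j -> in_Odisc abs a r (F j)) ->
  in_Odisc abs a r (fun l => \sum_(j <- s | P j) F j l).
Proof.
move=> ha hF; elim: s => [|j s IH].
  have -> : (fun l => \sum_(j <- [::] | P j) F j l) = (fun _ => 0) by apply: funext => l; rewrite big_nil.
  exact: Od_zero.
case Pj: (P j).
  have -> : (fun l => \sum_(i <- j :: s | P i) F i l) = (fun l => F j l + \sum_(i <- s | P i) F i l)
    by apply: funext => l; rewrite big_cons Pj.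
  by apply: Od_add => //; apply: hF.
by have -> : (fun l => \sum_(i <- j :: s | P i) F i l) = (fun l => \sum_(i <- s | P i) F i l)
    by apply: funext => l; rewrite big_cons Pj.
Qed.

Lemma Od_mono (k : fieldType) (R : realType) (abs : k -> R) a r r' c :
  r' <= r -> in_Odisc abs a r c -> in_Odisc abs a r' c.
Proof. by move=> hr hc x hx; apply: hc; exact: lt_le_trans hx hr. Qed.

Lemma rad_sup (k : fieldType) (R : realType) (abs : k -> R) a c :
  nonarch_abs abs ->
  has_sup [set r : R | 0 <= r < 1 /\ in_Odisc abs a r c].
Proof.
move=> ha; split.
  exists 0; split; first by rewrite lexx ltr01.
  move=> x hx; exfalso; case: ha => h1 _ _ _; move: (h1 (x - a)); rewrite leNgt hx //.
exists 1 => r [/andP[_ h] _]; exact: ltW.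
Qed.


Lemma radius_ge0 (k : fieldType) (R : realType) (abs : k -> R) a c :
  nonarch_abs abs -> 0 <= radius abs a c.
Proof.
move=> ha.
have H : [set r : R | 0 <= r < 1 /\ in_Odisc abs a r c]%classic 0.
  split; first by rewrite lexx ltr01.
  move=> x hx; exfalso; case: ha => h1 _ _ _; move: (h1 (x - a)); rewrite leNgt hx //.
exact: (sup_upper_bound (rad_sup a c ha) H).
Qed.

Lemma radius_le1 (k : fieldType) (R : realType) (abs : k -> R) a c :
  nonarch_abs abs -> radius abs a c <= 1.
Proof.
move=> ha; rewrite /radius; apply: ge_sup; first by case: (rad_sup a c ha).
by move=> r [/andP[_ h] _]; exact: ltW.
Qed.

Lemma radius_Od (k : fieldType) (R : realType) (abs : k -> R) a c r :
  nonarch_abs abs -> r <= radius abs a c -> in_Odisc abs a r c.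
Proof.
move=> ha hr x hx.
have hlt : abs (x - a) < radius abs a c by exact: lt_le_trans hx hr.
have hp : 0 < radius abs a c - abs (x - a) by rewrite subr_gt0.
have [e [_ He] he] := sup_adherent hp (rad_sup a c ha).
apply: He; move: he; rewrite /radius; lra.
Qed.

Lemma Od_radius (k : fieldType) (R : realType) (abs : k -> R) a c r :
  nonarch_abs abs -> r <= 1 -> in_Odisc abs a r c -> r <= radius abs a c.
Proof.
move=> ha r1 hc; rewrite leNgt; apply/negP => hlt.
have h0 := radius_ge0 a c ha.
set s := radius abs a c in hlt h0.
have H : [set r : R | 0 <= r < 1 /\ in_Odisc abs a r c]%classic ((s + r) / 2).
  split.
    apply/andP; split; lra.
  apply: Od_mono hc; lra.
have := sup_upper_bound (rad_sup a c ha) H.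
rewrite -/(radius abs a c) -/s; lra.
Qed.

Lemma rv_le1 (k : fieldType) (R : realType) (abs : k -> R) n a (y : vec k n) :
  nonarch_abs abs -> radius_vec abs a y <= 1.
Proof.
move=> ha; rewrite /radius_vec; elim/big_ind: _ => //.
- by move=> x z hx hz; rewrite ge_min hx.
- move=> i _; exact: radius_le1.
Qed.

Lemma rv_ge (k : fieldType) (R : realType) (abs : k -> R) n a (y : vec k n) r :
  nonarch_abs abs -> r <= 1 ->
  (r <= radius_vec abs a y <-> forall i, in_Odisc abs a r (y i)).
Proof.
move=> ha r1; split.
  move=> hr i; apply: radius_Od => //; apply: le_trans hr _; exact: bigmin_le.
move=> h; apply: le_bigmin => // i _; exact: Od_radius.
Qed.

Lemma rv_pos (k : fieldType) (R : realType) (abs : k -> R) n a G (y : vec k n) :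
  nonarch_abs abs -> horizontal abs a G y -> 0 < radius_vec abs a y.
Proof.
move=> ha [r [r0 [hy _]]].
have h1 : Num.min r 1 <= 1 by rewrite ge_min lexx orbT.
apply: lt_le_trans (_ : 0 < Num.min r 1) _; first by rewrite lt_min r0 ltr01.
apply/(rv_ge _ _ ha h1) => i; apply: Od_mono (hy i); by rewrite ge_min lexx.
Qed.

Lemma rv_lincomb (k : fieldType) (R : realType) (abs : k -> R) n a
   (P : pred 'I_n) (beta : 'I_n -> k) (m : 'I_n -> vec k n) r :
  nonarch_abs abs -> r <= 1 ->
  (forall j, P j -> beta j != 0 -> r <= radius_vec abs a (m j)) ->
  r <= radius_vec abs a (lincomb P beta m).
Proof.
move=> ha r1 h; apply/(rv_ge _ _ ha r1) => i.
have -> : lincomb P beta m i = (fun l => \sum_(j <- index_enum 'I_n | P j && (beta j != 0)) beta j * m j i l).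
  apply: funext => l; rewrite /lincomb.
  rewrite [RHS]big_mkcondr /=; apply: eq_bigr => j _.
  by case: eqP => [->|//]; rewrite mul0r.
apply: Od_sum => // j /andP[Pj bj]; apply: Od_scale => //.
by move: (h j Pj bj) => /(rv_ge _ _ ha r1); apply.
Qed.

Lemma fmul_lin (k : fieldType) n (c : nat -> k) (P : pred 'I_n) (beta : 'I_n -> k)
   (F : 'I_n -> nat -> k) l :
  fmul c (fun x => \sum_(q < n | P q) beta q * F q x) l =
  \sum_(q < n | P q) beta q * fmul c (F q) l.
Proof.
rewrite /fmul.
under eq_bigr => t _ do rewrite mulr_sumr.
rewrite exchange_big /=; apply: eq_bigr => q _.
rewrite mulr_sumr; apply: eq_bigr => t _; ring.
Qed.

Lemma Dt_lincomb (k : fieldType) (R : realType) (abs : k -> R) n a (G : 'I_n -> 'I_n -> nat -> k)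
   (P : pred 'I_n) (beta : 'I_n -> k) (m : 'I_n -> vec k n) i l :
  Dt_at abs a G (lincomb P beta m) i l =
  \sum_(q < n | P q) beta q * Dt_at abs a G (m q) i l.
Proof.
rewrite /Dt_at /fderiv /lincomb.
under [in RHS]eq_bigr => q _ do rewrite mulrDr.
rewrite big_split /=; congr (_ + _).
  rewrite -sumrMnl; apply: eq_bigr => q _; by rewrite mulrnAr.
under eq_bigr => j _ do rewrite fmul_lin.
rewrite exchange_big /=; apply: eq_bigr => q _; by rewrite mulr_sumr.
Qed.

Lemma lincomb_horizontal (k : fieldType) (R : realType) (abs : k -> R) n a G
   (P : pred 'I_n) (beta : 'I_n -> k) (m : 'I_n -> vec k n) :
  nonarch_abs abs -> (forall j, horizontal abs a G (m j)) ->
  horizontal abs a G (lincomb P beta m).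
Proof.
move=> ha hm.
set r0 := \big[Num.min/1]_(j < n) radius_vec abs a (m j).
have r01 : r0 <= 1.
  rewrite /r0; elim/big_ind: _ => //; first by move=> x z hx _; rewrite ge_min hx.
  move=> j _; exact: rv_le1.
have r0p : 0 < r0.
  rewrite /r0; elim/big_ind: _ => //; first by move=> x z hx hz; rewrite lt_min hx.
  move=> j _; exact: rv_pos (hm j).
have hr : r0 <= radius_vec abs a (lincomb P beta m).
  apply: rv_lincomb => // j _ _; exact: bigmin_le.
exists r0; split => //; split; first by apply/(rv_ge _ _ ha r01).
apply: funext => i; apply: funext => l; rewrite Dt_lincomb big1 // => q _.
have [_ [_ [_ ->]]] := hm q; by rewrite mulr0.
Qed.

Lemma beta_nz (k : fieldType) n (m : 'I_n -> vec k n) (y : vec k n) beta :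
  y <> (fun _ _ => 0) -> y = lincomb predT beta m -> exists j, beta j != 0.
Proof.
move=> ynz hy; apply: contra_notP ynz => hb; rewrite hy.
apply: funext => i; apply: funext => l; rewrite /lincomb big1 // => j _.
have -> : beta j = 0 by apply/eqP; apply: contra_notT hb => hj; exists j.
by rewrite mul0r.
Qed.

Lemma lincomb_mkcond (k : fieldType) n (m : 'I_n -> vec k n) (P : pred 'I_n) beta :
  lincomb P beta m = lincomb predT (fun j => if P j then beta j else 0) m.
Proof.
apply: funext => i; apply: funext => l; rewrite /lincomb big_mkcond /=.
by apply: eq_bigr => j _; case: (P j) => //; rewrite mul0r.
Qed.

Lemma c3_c2 (k : fieldType) (R : realType) (abs : k -> R) n a G (m : 'I_n -> vec k n) :
  nonarch_abs abs -> horizontal_basis abs a G m ->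
  (forall y : vec k n, horizontal abs a G y -> y <> (fun _ _ => 0) ->
        forall beta : 'I_n -> k, y = lincomb predT beta m ->
          (forall i, beta i <> 0 -> radius_vec abs a y <= radius_vec abs a (m i)) /\
          (exists i, beta i <> 0 /\ radius_vec abs a (m i) = radius_vec abs a y)) ->
  (forall (r : R) (alpha : 'I_n -> k),
        (exists j, radius_vec abs a (m j) = r /\ alpha j <> 0) ->
        radius_vec abs a (lincomb (fun j => radius_vec abs a (m j) == r) alpha m) = r).
Proof.
move=> ha [hh hli _] h3 r alpha [j [hj aj]].
set y := lincomb _ alpha m.
have hy : horizontal abs a G y by apply: lincomb_horizontal.
have yb := lincomb_mkcond m (fun j => radius_vec abs a (m j) == r) alpha.
have ynz : y <> (fun _ _ => 0).
  move=> y0; apply: aj.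
  have h0 : lincomb predT (fun j => if radius_vec abs a (m j) == r then alpha j else 0) m = (fun _ _ => 0)
    by rewrite -yb.
  by have := hli _ h0 j; rewrite hj eqxx.
have [_ [i [bi <-]]] := h3 y hy ynz _ yb.
by move: bi; case: eqP.
Qed.

Lemma c2_c3 (k : fieldType) (R : realType) (abs : k -> R) n a G (m : 'I_n -> vec k n) :
  nonarch_abs abs -> horizontal_basis abs a G m ->
  (forall (r : R) (alpha : 'I_n -> k),
        (exists j, radius_vec abs a (m j) = r /\ alpha j <> 0) ->
        radius_vec abs a (lincomb (fun j => radius_vec abs a (m j) == r) alpha m) = r) ->
  (forall y : vec k n, horizontal abs a G y -> y <> (fun _ _ => 0) ->
        forall beta : 'I_n -> k, y = lincomb predT beta m ->
          (forall i, beta i <> 0 -> radius_vec abs a y <= radius_vec abs a (m i)) /\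
          (exists i, beta i <> 0 /\ radius_vec abs a (m i) = radius_vec abs a y)).
Proof.
move=> ha [hh hli _] h2 y hy ynz beta hyb.
set rho := fun j => radius_vec abs a (m j).
have [j0 bj0] := beta_nz ynz hyb.
case: (@arg_minP _ _ _ j0 (fun i => beta i != 0) rho bj0) => i0 bi0 hmin.
set r0 := rho i0.
have r01 : r0 <= 1 by exact: rv_le1.
have ge : r0 <= radius_vec abs a y.
  rewrite hyb; apply: rv_lincomb => // j _ bj; exact: hmin.
suff eq : radius_vec abs a y = r0.
  split; first by move=> i /eqP bi; rewrite eq; exact: hmin.
  by exists i0; split; [exact/eqP|].
apply/eqP; rewrite eq_le ge andbT.
have [r0e|r0lt] := eqVneq r0 1; first by rewrite r0e; exact: rv_le1.
have r0l : r0 < 1 by rewrite lt_neqAle r0lt r01.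
rewrite leNgt; apply/negP => hgt.
set A := lincomb (fun j => rho j == r0) beta m.
set B := lincomb (fun j => rho j != r0) beta m.
have hA : radius_vec abs a A = r0.
  by apply: h2; exists i0; split => //; exact/eqP.
set r1 := \big[Num.min/1]_(j < n) (if (rho j != r0) && (beta j != 0) then rho j else 1).
have r11 : r1 <= 1.
  rewrite /r1; elim/big_ind: _ => //; first by move=> x z hx _; rewrite ge_min hx.
  move=> j _; case: ifP => // _; exact: rv_le1.
have r01' : r0 < r1.
  apply: lt_bigmin => // j _; case: ifP => // /andP[hj bj].
  by rewrite lt_neqAle eq_sym hj hmin.
have hB : r1 <= radius_vec abs a B.
  apply: rv_lincomb => // j hj bj; apply: le_trans (bigmin_le _ j _) _.
  by rewrite hj bj.
set r2 := Num.min (radius_vec abs a y) r1.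
have r21 : r2 <= 1 by rewrite ge_min r11 orbT.
have hyAB : forall i l, y i l = A i l + B i l.
  move=> i l; rewrite hyb /A /B /lincomb (bigID (fun j => rho j == r0)) /=.
  done.
have : r2 <= radius_vec abs a A.
  apply/(rv_ge _ _ ha r21) => i.
  have -> : A i = (fun l => y i l + (-1) * B i l).
    apply: funext => l; rewrite hyAB; ring.
  apply: Od_add => //.
    move: (le_refl (radius_vec abs a y)); rewrite -/r2.
    have : r2 <= radius_vec abs a y by rewrite ge_min lexx.
    by move=> /(rv_ge _ _ ha r21); move=> h _; apply: h.
  apply: Od_scale => //.
  have : r2 <= radius_vec abs a B by apply: le_trans hB; rewrite ge_min lexx orbT.
  by move=> /(rv_ge _ _ ha r21); apply.
rewrite hA; apply/negP; rewrite -ltNge lt_min hgt r01'.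
done.
Qed.

Lemma lin_indep_inj (k : fieldType) n d d' (v : 'I_d -> vec k n) (f : 'I_d' -> 'I_d) :
  injective f -> lin_indep v -> lin_indep (fun l => v (f l)).
Proof.
move=> finj hv g hg l0.
pose b j := \sum_(l < d') (if j == f l then g l else 0).
have hb : (fun i x => \sum_(j < d) b j * v j i x) = (fun _ _ => 0).
  apply: funext => i; apply: funext => x.
  have hgx := congr1 (fun F => F i x) hg; simpl in hgx.
  transitivity (\sum_(j < d') g j * v (f j) i x); last exact: hgx.
  have -> : \sum_(l < d') g l * v (f l) i x =
     \sum_(l < d') \sum_(j < d) (if j == f l then g l * v j i x else 0).
    apply: eq_bigr => l _; rewrite -big_mkcond /= big_pred1_eq //.
  rewrite exchange_big /=; apply: eq_bigr => j _; rewrite /b mulr_suml.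
  by apply: eq_bigr => l _; case: eqP => // _; rewrite mul0r.
have := hv b hb (f l0); rewrite /b.
under eq_bigr => l _ do rewrite (inj_eq finj) eq_sym.
by rewrite -big_mkcond /= big_pred1_eq.
Qed.

Lemma dim_ker_mono (k : fieldType) (R : realType) (abs : k -> R) n a G r d d' :
  dim_ker_ge (n:=n) abs a G r d -> (d' <= d)%N -> dim_ker_ge abs a G r d'.
Proof.
move=> [v [hv hi]] hd; exists (fun l => v (widen_ord hd l)); split => // .
apply: lin_indep_inj hi => x y /(congr1 val) /= hxy; exact: val_inj.
Qed.

Lemma card_ge_ord n c : (c <= n)%N -> #|[set i : 'I_n | (c <= i)%N]| = (n - c)%N.
Proof.
move=> hc; rewrite -sum1_card.
have -> : \sum_(i in [set i : 'I_n | (c <= i)%N]) 1 = \sum_(i < n | (c <= i)%N) 1%N.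
  by apply: eq_bigl => i; rewrite inE.
rewrite -(big_geq_mkord c n predT (fun _ => 1%N)) /= -big_filter.
rewrite filter_predT sum_nat_const_nat muln1 //.
Qed.

Lemma mr_ge (k : fieldType) (R : realType) (abs : k -> R) n a G (i : 'I_n) r :
  0 < r <= 1 -> dim_ker_ge abs a G r (n - i) -> r <= multiradius abs a G i.
Proof.
move=> hr hd; rewrite /multiradius.
have hs : has_sup [set r : R | 0 < r <= 1 /\ dim_ker_ge abs a G r (n - i)]%classic.
  split; first by exists r.
  by exists 1 => x [/andP[_ h] _].
exact: (sup_upper_bound hs (conj hr hd)).
Qed.

Lemma mr_eq (k : fieldType) (R : realType) (abs : k -> R) n a G (i : 'I_n) t :
  0 < t <= 1 -> dim_ker_ge abs a G t (n - i) ->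
  (forall r, 0 < r <= 1 -> dim_ker_ge abs a G r (n - i) -> r <= t) ->
  multiradius abs a G i = t.
Proof.
move=> ht hd hub; apply/eqP; rewrite eq_le mr_ge // andbT.
rewrite /multiradius; apply: ge_sup; first by exists t.
by move=> r [h1 h2]; apply: hub.
Qed.

Lemma ker_of (k : fieldType) (R : realType) (abs : k -> R) n a G (y : vec k n) r :
  nonarch_abs abs -> horizontal abs a G y -> r <= 1 -> r <= radius_vec abs a y ->
  in_ker abs a G r y.
Proof.
move=> ha [r' [_ [_ hD]]] r1 hr; split => //; exact/(rv_ge _ _ ha r1).
Qed.

Lemma dim_from_set (k : fieldType) (R : realType) (abs : k -> R) n a G
   (m : 'I_n -> vec k n) (J : {set 'I_n}) r :
  nonarch_abs abs -> horizontal_basis abs a G m -> r <= 1 ->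
  (forall j, j \in J -> r <= radius_vec abs a (m j)) ->
  dim_ker_ge abs a G r #|J|.
Proof.
move=> ha [hh hli _] r1 hJ; exists (fun l => m (enum_val l)); split.
  move=> l; apply: ker_of => //; apply: hJ; exact: enum_valP.
apply: lin_indep_inj hli; exact: enum_val_inj.
Qed.

Lemma opt_c3 (k : fieldType) (R : realType) (abs : k -> R) n a G (m : 'I_n -> vec k n) :
  nonarch_abs abs -> horizontal_basis abs a G m -> optimal_basis abs a G m ->
  (forall y : vec k n, horizontal abs a G y -> y <> (fun _ _ => 0) ->
        forall beta : 'I_n -> k, y = lincomb predT beta m ->
          (forall i, beta i <> 0 -> radius_vec abs a y <= radius_vec abs a (m i)) /\
          (exists i, beta i <> 0 /\ radius_vec abs a (m i) = radius_vec abs a y)).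
Proof.
move=> ha hm0 [s hs] y hy ynz beta hyb.
have [hh hli _] := hm0.
set rho := fun j => radius_vec abs a (m j).
have [j0 bj0] := beta_nz ynz hyb.
case: (@arg_minP _ _ _ j0 (fun i => beta i != 0) rho bj0) => i0 bi0 hmin.
set r0 := rho i0.
have r01 : r0 <= 1 by exact: rv_le1.
have ge : r0 <= radius_vec abs a y.
  rewrite hyb; apply: rv_lincomb => // j _ bj; exact: hmin.
suff eq : radius_vec abs a y = r0.
  split; first by move=> i /eqP bi; rewrite eq; exact: hmin.
  by exists i0; split; [exact/eqP|].
apply/eqP; rewrite eq_le ge andbT.
rewrite leNgt; apply/negP => hgt.
set r := radius_vec abs a y in hgt ge.
have r1 : r <= 1 by exact: rv_le1.
have rpos : 0 < r by exact: rv_pos hy.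
set J := [set j | r <= rho j].
have i0J : i0 \notin J by rewrite inE -ltNge.
set K := i0 |: J.
pose w j := if j == i0 then y else m j.
have hyi : forall i x, y i x = \sum_(j < n) beta j * m j i x by move=> i x; rewrite hyb.
have hw : lin_indep w.
  move=> c hc.
  pose g j := (if j == i0 then 0 else c j) + c i0 * beta j.
  have hg : (fun i x => \sum_(j < n) g j * m j i x) = (fun _ _ => 0).
    apply: funext => i; apply: funext => x.
    transitivity (\sum_(j < n) c j * w j i x); last exact: (congr1 (fun F => F i x) hc).
    rewrite /g; under eq_bigr => j _ do rewrite mulrDl -mulrA.
    rewrite big_split /= -mulr_sumr -hyi.
    rewrite [in RHS](bigD1 i0) //= /w eqxx addrC; congr (_ + _).
    rewrite (bigD1 i0) //= eqxx mul0r add0r; apply: eq_bigr => j /negbTE -> //.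
  move=> j; have := hli g hg.
  have ci0 : c i0 = 0.
    move: (hli g hg i0); rewrite /g eqxx add0r => /eqP; rewrite mulf_eq0 (negbTE bi0) orbF.
    by move/eqP.
  move=> /(_ j); rewrite /g ci0 mul0r addr0; case: eqP => [->|] //.
have dK : dim_ker_ge abs a G r #|K|.
  exists (fun l => w (enum_val l)); split; last by apply: lin_indep_inj hw; exact: enum_val_inj.
  move=> l; rewrite /w; case: eqP => [_|ne]; first by apply: ker_of.
  have := enum_valP l; rewrite /K => /setU1P [e|]; first by exfalso; exact: ne.
  by rewrite inE => hJ; apply: ker_of.
have Kn : (#|K| <= n)%N by rewrite -[X in (_ <= X)%N]card_ord max_card.
have sub : [set i : 'I_n | (n - #|K| <= i)%N] \subset s @^-1: J.
  apply/fintype.subsetP => i; rewrite !inE => hi.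
  have hd : (n - i <= #|K|)%N by lia.
  have := mr_ge (i := i) (_ : 0 < r <= 1) (dim_ker_mono dK hd).
  by rewrite -hs; apply; rewrite rpos r1.
have := subset_leq_card sub; rewrite card_ge_ord ?leq_subr // card_preimset; last exact: perm_inj.
rewrite subKn // /K cardsU1 i0J /=; lia.
Qed.

Lemma steinitz (k : fieldType) (R : realType) (abs : k -> R) n a G (m : 'I_n -> vec k n) r d :
  nonarch_abs abs -> horizontal_basis abs a G m ->
  (forall y : vec k n, horizontal abs a G y -> y <> (fun _ _ => 0) ->
        forall beta : 'I_n -> k, y = lincomb predT beta m ->
          (forall i, beta i <> 0 -> radius_vec abs a y <= radius_vec abs a (m i)) /\
          (exists i, beta i <> 0 /\ radius_vec abs a (m i) = radius_vec abs a y)) ->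
  0 < r <= 1 -> dim_ker_ge abs a G r d ->
  (d <= #|[set j | (r <= radius_vec abs a (m j))%R]|)%N.
Proof.
move=> ha [hh hli hsp] h3 /andP[r0 r1] [v [hv hi]].
set J := [set j | r <= radius_vec abs a (m j)].
have hor : forall l, horizontal abs a G (v l) by move=> l; exists r; split.
have hb : forall l, exists beta, v l = lincomb predT beta m by move=> l; apply: hsp.
have [B hB] := choice hb.
have vnz : forall l, v l <> (fun _ _ => 0).
  move=> l h0.
  have hg : (fun i x => \sum_(l' < d) (l' == l)%:R * v l' i x) = (fun _ _ => (0 : k)).
    apply: funext => i; apply: funext => x.
    rewrite (bigD1 l) //= eqxx mul1r big1; first by rewrite h0 addr0.
    by move=> j /negbTE ->; rewrite mul0r.
  by have := hi _ hg l; rewrite eqxx => /eqP; rewrite oner_eq0.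
have supp : forall l j, B l j != 0 -> j \in J.
  move=> l j /eqP bj; rewrite inE.
  have [h _] := h3 _ (hor l) (vnz l) _ (hB l).
  apply: le_trans (h j bj); apply/(rv_ge _ _ ha r1); by case: (hv l).
pose M : 'M[k]_(d, #|J|) := \matrix_(l, t) B l (enum_val t).
have : row_free M.
  apply: inj_row_free => u hu.
  have hg : (fun i x => \sum_(l < d) u 0 l * v l i x) = (fun _ _ => 0).
    apply: funext => i; apply: funext => x.
    under eq_bigr => l _ do rewrite (hB l) /lincomb mulr_sumr.
    rewrite exchange_big /=; apply: big1 => j _.
    under eq_bigr => l _ do rewrite mulrA.
    rewrite -mulr_suml; apply/eqP; rewrite mulf_eq0; apply/orP; left; apply/eqP.
    case hj: (j \in J).
      transitivity ((u *m M) 0 (enum_rank_in hj j : 'I_#|J|)); last by rewrite hu mxE.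
      by rewrite mxE; apply: eq_bigr => l _; rewrite mxE enum_rankK_in.
    apply: big1 => l _; case: (eqVneq (B l j) 0) => [->|/supp]; first by rewrite mulr0.
    by rewrite hj.
  apply/matrixP => i l; rewrite mxE (ord1 i); exact: hi _ hg l.
rewrite /row_free => /eqP <-; exact: rank_leq_col.
Qed.

Lemma c3_opt (k : fieldType) (R : realType) (abs : k -> R) n a G (m : 'I_n -> vec k n) :
  nonarch_abs abs -> horizontal_basis abs a G m ->
  (forall y : vec k n, horizontal abs a G y -> y <> (fun _ _ => 0) ->
        forall beta : 'I_n -> k, y = lincomb predT beta m ->
          (forall i, beta i <> 0 -> radius_vec abs a y <= radius_vec abs a (m i)) /\
          (exists i, beta i <> 0 /\ radius_vec abs a (m i) = radius_vec abs a y)) ->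
  optimal_basis abs a G m.
Proof.
move=> ha hm0 h3.
have [hh hli hsp] := hm0.
set rho := fun j => radius_vec abs a (m j).
pose le := (fun x y : R => x <= y).
pose tr := [tuple rho j | j < n].
pose st := sort_tuple le tr.
have hpe : perm_eq (st : seq R) tr by rewrite /st /= perm_sort.
have [p hp] := tuple_permP hpe.
have teq : st = [tuple tnth tr (p i) | i < n] by apply: val_inj.
pose u i := tnth st i.
have hu : forall i, u i = rho (p i) by move=> i; rewrite /u teq !tnth_mktuple.
have srt : sorted le st by rewrite /st /=; apply: sort_sorted => x y; exact: le_total.
have mono : forall i j : 'I_n, (i <= j)%N -> u i <= u j.
  move=> i j hij; rewrite /u !(tnth_nth 0).
  apply: (sorted_leq_nth (@le_trans _ _) (@lexx _ _) 0 srt) => //; rewrite inE size_tuple //.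
exists p => i; have -> : radius_vec abs a (m (p i)) = u i by rewrite hu.
symmetry.
have upos : 0 < u i <= 1 by rewrite hu /rho rv_le1 // andbT; exact: rv_pos (hh _).
apply: mr_eq => //.
  set J := [set j | u i <= rho j].
  have := dim_from_set (J := J) ha hm0 (r := u i).
  move=> /(_ _ _) hd; apply: dim_ker_mono (hd _ _) _.
  - by case/andP: upos.
  - by move=> j; rewrite inE.
  have sub : [set l : 'I_n | (i <= l)%N] \subset p @^-1: J.
    apply/fintype.subsetP => l; rewrite !inE => hl; rewrite -hu; exact: mono.
  have := subset_leq_card sub; rewrite card_preimset; last exact: perm_inj.
  rewrite card_ge_ord //.
  exact: ltnW.
move=> r hr hd; rewrite leNgt; apply/negP => hlt.
have := steinitz ha hm0 h3 hr hd.
set J := [set j | _].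
have sub : p @^-1: J \subset [set l : 'I_n | (i.+1 <= l)%N].
  apply/fintype.subsetP => l; rewrite !inE => hl; rewrite ltnNge; apply/negP => hli'.
  have := mono _ _ hli'; rewrite hu; move: hl; rewrite /rho => hl h'.
  have : r <= u i by apply: le_trans hl h'.
  by rewrite leNgt hlt.
have := subset_leq_card sub; rewrite card_preimset; last exact: perm_inj.
  rewrite card_ge_ord //.
have := ltn_ord i; move: #|J| (nat_of_ord i) => x y; lia.
Qed.
Theorem lemma3p7 (k : closedFieldType) (R : realType) (abs : k -> R) (p : nat)
  (habs : nonarch_abs abs) (hp : prime p) (hpadic : extends_padic abs p)
  (hcomplete : abs_complete abs)
  (closed : bool) (n : nat) (G : 'I_n -> 'I_n -> nat -> k)
  (hG : diffmod abs closed G)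
  (a : k) (ha : in_unit_disc abs closed a)
  (m : 'I_n -> vec k n) (hm : horizontal_basis abs a G m) :
  (optimal_basis abs a G m <->
     (forall (r : R) (alpha : 'I_n -> k),
        (exists j, radius_vec abs a (m j) = r /\ alpha j <> 0) ->
        radius_vec abs a (lincomb (fun j => radius_vec abs a (m j) == r) alpha m) = r))
  /\
  (optimal_basis abs a G m <->
     (forall y : vec k n, horizontal abs a G y -> y <> (fun _ _ => 0) ->
        forall beta : 'I_n -> k, y = lincomb predT beta m ->
          (forall i, beta i <> 0 -> radius_vec abs a y <= radius_vec abs a (m i)) /\
          (exists i, beta i <> 0 /\ radius_vec abs a (m i) = radius_vec abs a y))).
Proof.
have c3o := c3_opt habs hm.
have o3 := opt_c3 habs hm.
split; split => h.
- exact: c3_c2 habs hm (o3 h).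
- apply: c3o; exact: c2_c3 habs hm h.
- exact: o3.
- exact: c3o.
Qed.
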